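(* For every integer $k\ge1$ let $a_k=(a_k(n))_{n\ge0}$ and $b_k=(b_k(n))_{n\ge0}$ be given by $a_k(n)=A_{n+k-1,k}$ and $b_k(n)=B_{n+k,k}$. Then: (i) $a_k,b_k\in\ell^1(\mathbb{N}^0,\frac{1}{4^n})$ with $\|a_k\|_{1,\frac1{4^n}}=2^{2k-1}$ and $\|b_k\|_{1,\frac1{4^n}}=2^{2k}$; (ii) $Z(a_k)(z)=(C(z))^{2k-1}$ and $Z(b_k)(z)=(C(z))^{2k}$ for $|z|<\frac14$; (iii) $a_k$ equals the convolution product of $2k-1$ copies of $c$, and $b_k$ equals the convolution product of $2k$ copies of $c$ (in the paper's notation, $a_k=c^{\ast(2k-2)}$ and $b_k=c^{\ast(2k-1)}$).
   Context: $C_n=\frac{1}{n+1}\binom{2n}{n}$ are the Catalan numbers, $c=(C_n)_{n\ge0}$, and $C(z)=\sum_{n\ge0}C_nz^n=\frac{1-\sqrt{1-4z}}{2z}$ for $|z|<\frac14$. The Catalan triangle numbers are $B_{n,k}=\frac{k}{n}\binom{2n}{n-k}$ ($n\ge1$, $1\le k\le n$) and $A_{n,k}=\frac{2k-1}{2n+1}\binom{2n+1}{n+1-k}$ ($n\ge0$, $1\le k\le n+1$). $\ell^1(\mathbb{N}^0,\frac1{4^n})$ is the Banach algebra of complex sequences $a=(a(n))_{n\ge0}$ with $\|a\|_{1,\frac1{4^n}}=\sum_{n\ge0}|a(n)|/4^n<\infty$, with convolution product $(a\ast b)(n)=\sum_{j=0}^n a(n-j)b(j)$. The paper's convention for convolution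 powers is $a^{\ast0}=a$, $a^{\ast n}=a^{\ast(n-1)}\ast a$, so $a^{\ast m}$ is the product of $m+1$ copies of $a$. $Z(a)(z)=\sum_{n\ge0}a(n)z^n$ is the $Z$-transform. *)

(* Defs.v *)
From HB Require Import structures.
From mathcomp Require Import all_boot all_order all_algebra.
From mathcomp Require Import all_classical all_reals all_analysis.
From mathcomp Require Export complex.
Export Order.TTheory GRing.Theory Num.Theory.
Export numFieldTopology.Exports numFieldNormedType.Exports.

Set Implicit Arguments.
Unset Strict Implicit.
Unset Printing Implicit Defensive.

Local Open Scope ring_scope.
Local Open Scope classical_set_scope.

(* Give R[i] its usual (norm) topology / normed-module structure. *)
HB.instance Definition _ (R : rcfType) := NormedModule.copy R[i] (R[i])^o.

Section Defs.
Variable R : realType.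

Definition catalan (n : nat) : R := 'C(n.*2, n)%:R / n.+1%:R.

Definition catB (n k : nat) : R := (k%:R / n%:R) * 'C(n.*2, n - k)%:R.
Definition catA (n k : nat) : R :=
  ((k.*2.-1)%:R / (n.*2.+1)%:R) * 'C(n.*2.+1, n.+1 - k)%:R.

Definition a_k (k : nat) : nat -> R := fun n => catA (n + k).-1 k.
Definition b_k (k : nat) : nat -> R := fun n => catB (n + k) k.

Definition weighted_abs (a : nat -> R) : nat -> R := fun n => `|a n| / 4%:R ^+ n.
Definition in_l1_4 (a : nat -> R) : Prop := cvgn (series (weighted_abs a)).
Definition norm_l1_4 (a : nat -> R) : R := limn (series (weighted_abs a)).

(* Convolution product and the paper's convolution powers:
   cpow a 0 = a, cpow a m = cpow a (m-1) * a  (m+1 factors) *)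
Definition conv (a b : nat -> R) : nat -> R :=
  fun n => \sum_(j < n.+1) a (n - j)%N * b j.
Fixpoint cpow (a : nat -> R) (m : nat) : nat -> R :=
  match m with
  | 0 => a
  | m'.+1 => conv (cpow a m') a
  end.

Definition Zpartial (a : nat -> R) (z : R[i]) : nat -> R[i] :=
  series (fun n => (a n)%:C%C * z ^+ n).

Definition catGF (z : R[i]) : R[i] :=
  if z == 0 then 1 else (1 - sqrtc (1 - 4%:R * z)) / (2%:R * z).

End Defs.

(* Main.v *)
Require Import Defs.
From HB Require Import structures.
From mathcomp Require Import all_boot all_order all_algebra.
From mathcomp Require Import all_classical all_reals all_analysis.
From mathcomp Require Import complex.
From mathcomp Require Import zify ring lra.
Import Order.TTheory GRing.Theory Num.Theory.
Import numFieldTopology.Exports numFieldNormedType.Exports.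
Local Open Scope ring_scope.
Local Open Scope classical_set_scope.

Fixpoint Tn (n : nat) : nat -> nat :=
  match n with
  | 0 => fun _ => 1%N
  | n'.+1 => fix g m := match m with 0 => 0%N | m'.+1 => (g m' + Tn n' m'.+2)%N end
  end.
Definition T m n := Tn n m.

Lemma T_0 m : T m 0 = 1%N. Proof. by []. Qed.
Lemma T0S n : T 0 n.+1 = 0%N. Proof. by []. Qed.
Lemma TSS m n : T m.+1 n.+1 = (T m n.+1 + T m.+2 n)%N. Proof. by []. Qed.

Lemma T_ballot m n : (T m n.+1 + 'C(n.*2 + m.+1, n) = 'C(n.*2 + m.+1, n.+1))%N.
Proof.
elim: n m => [|n IHn] m.
  elim: m => [|m IHm]; first by rewrite T0S.
  rewrite TSS T_0 !bin0 !bin1 in IHm *; lia.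
elim: m => [|m IHm].
  rewrite T0S add0n -(bin_sub (n := (n.+1).*2 + 1) (m := n.+1)); last by lia.
  by congr 'C(_, _); lia.
rewrite TSS.
have h1 := IHn m.+2. have h2 := IHm.
have e1 : ((n.+1).*2 + m.+2 = (n.*2 + m.+3).+1)%N by lia.
have e2 : ((n.+1).*2 + m.+1 = n.*2 + m.+3)%N by lia.
have e3 : (n.*2 + m.+2.+1 = n.*2 + m.+3)%N by lia.
rewrite e2 in h2; rewrite e1 !binS.
lia.
Qed.

Lemma T_closed m n : (0 < m)%N -> ((n.*2 + m) * T m n = m * 'C(n.*2 + m, n))%N.
Proof.
move=> m0; case: n => [|n]; first by rewrite T_0 bin0 muln1; lia.
have B := T_ballot m n.
set N := (n.*2 + m.+1)%N in B.
have eN : ((n.+1).*2 + m = N.+1)%N by rewrite /N; lia.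
rewrite eN.
have d1 := mul_bin_diag N.+1 n.
have d2 := mul_bin_down N.+1 n.+1.
rewrite /= in d1 d2.
have eX : (N.+1 - n.+1 = n + m.+1)%N by rewrite /N; lia.
rewrite eX in d2.
nia.
Qed.

Arguments T : simpl never.
Lemma T_conv m r n :
  (\sum_(j < n.+1) T m (n - j) * T r j)%N = T (m + r) n.
Proof.
elim: n m r => [|n IHn] m r; first by rewrite big_ord1 !T_0.
elim: r => [|r IHr].
  rewrite big_ord_recl /= T_0 muln1 addn0 big1 ?addn0 // => j _.
  by rewrite /bump /= T0S muln0.
rewrite big_ord_recl /= T_0 muln1 in IHr.
rewrite big_ord_recl /= T_0 muln1.
under eq_bigr => j _ do rewrite /bump /= add1n subSS TSS mulnDr.
have E : forall j : 'I_n.+1, (n.+1 - bump 0 j = n - j)%N by move=> j; rewrite /bump /= add1n subSS.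
rewrite (eq_bigr (fun j : 'I_n.+1 => T m (n - j) * T r j.+1)%N) in IHr; last by move=> j _; rewrite E.
rewrite big_split /= IHn addnA IHr.
by rewrite !addnS TSS.
Qed.

Section Real.
Variable R : realType.

Lemma T_closedR m n : (0 < m)%N ->
  (T m n)%:R = m%:R / (n.*2 + m)%:R * ('C(n.*2 + m, n))%:R :> R.
Proof.
move=> m0; have := @T_closed m n m0 => /(congr1 (fun x => x%:R : R)).
rewrite !natrM => h.
have nz : (n.*2 + m)%:R != 0 :> R by rewrite pnatr_eq0; lia.
apply: (mulfI nz); rewrite h; field.
by rewrite -natrD.
Qed.

Lemma catalan_T n : catalan R n = (T 1 n)%:R.
Proof.
rewrite T_closedR // /catalan.
have := mul_bin_down (n.*2 + 1) n => /(congr1 (fun x => x%:R : R)).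
rewrite /= addn1 /= !natrM => h.
have e : (n.*2.+1 - n = n.+1)%N by lia.
rewrite e in h.
have nz1 : (n.+1)%:R != 0 :> R by rewrite pnatr_eq0.
have nz2 : (n.*2.+1)%:R != 0 :> R by rewrite pnatr_eq0.
rewrite mul1r [RHS]mulrC; apply/eqP; rewrite eqr_div //.
by rewrite mulrC h mulrC.
Qed.

Lemma cpow_T j : cpow (catalan R) j = fun n => (T j.+1 n)%:R.
Proof.
elim: j => [|j IH]; first by apply/funext => n /=; rewrite catalan_T.
apply/funext => n /=; rewrite /Defs.conv IH.
under eq_bigr => i _ do rewrite catalan_T -natrM.
by rewrite -natr_sum T_conv addn1.
Qed.

Lemma a_k_T k : (0 < k)%N -> a_k R k = fun n => (T k.*2.-1 n)%:R.
Proof.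
move=> k0; apply/funext => n; rewrite T_closedR; last by lia.
rewrite /a_k /Defs.catA.
have e1 : (((n + k).-1).*2.+1 = n.*2 + k.*2.-1)%N by lia.
have e2 : (((n + k).-1).+1 - k = n)%N by lia.
by rewrite e1 e2.
Qed.

Lemma b_k_T k : (0 < k)%N -> b_k R k = fun n => (T k.*2 n)%:R.
Proof.
move=> k0; apply/funext => n; rewrite T_closedR; last by lia.
rewrite /b_k /Defs.catB.
have e1 : (n.*2 + k.*2 = (n + k).*2)%N by lia.
have e2 : (n + k - k = n)%N by lia.
rewrite e1 e2 -!muln2 !natrM.
have nz : (n + k)%:R != 0 :> R by rewrite pnatr_eq0; lia.
field.
by rewrite -natrD.
Qed.
End Real.

Section Gen.
Variable V : comNzRingType.

Definition Sp (x : V) m N := \sum_(n < N) (T m n)%:R * x ^+ n.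

Lemma S_rec (x : V) m N : Sp x m.+1 N.+1 = Sp x m N.+1 + x * Sp x m.+2 N.
Proof.
rewrite /Sp !big_ord_recl !T_0 !expr0 mulr_sumr -addrA; congr (_ + _).
rewrite -big_split; apply: eq_bigr => i _.
rewrite lift0 TSS natrD exprS /=; ring.
Qed.

Lemma S0 (x : V) N : Sp x 0 N.+1 = 1.
Proof.
rewrite /Sp big_ord_recl T_0 expr0 mulr1 big1 ?addr0 // => i _.
by rewrite lift0 T0S mul0r.
Qed.

Lemma S_tel (x : V) m N : Sp x m N.+1 = 1 + x * \sum_(i < m) Sp x i.+2 N.
Proof.
elim: m => [|m IH]; first by rewrite S0 big_ord0 mulr0 addr0.
by rewrite S_rec IH big_ord_recr /= mulrDr addrA.
Qed.

Fixpoint Err (x X : V) N m : V :=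
  match N with
  | 0 => X ^+ m
  | N'.+1 => @GRing.mul V x (\big[@GRing.add V/0]_(i < m) Err x X N' i.+2)
  end.

Lemma X_tel (x X : V) : X = 1 + x * X ^+ 2 ->
  forall m, X ^+ m = 1 + x * \sum_(i < m) X ^+ i.+2.
Proof.
move=> hX; elim=> [|m IH]; first by rewrite big_ord0 mulr0 addr0.
rewrite big_ord_recr /= mulrDr addrA -IH exprS {1}hX (exprS X m.+1) (exprS X m); ring.
Qed.

Lemma Err_eq (x X : V) : X = 1 + x * X ^+ 2 ->
  forall N m, X ^+ m - Sp x m N = Err x X N m.
Proof.
move=> hX; elim=> [|N IH] m; first by rewrite /Sp big_ord0 subr0.
rewrite S_tel (X_tel x X hX m) /=.
rewrite [in RHS](eq_bigr (fun i : 'I_m => X ^+ i.+2 - Sp x i.+2 N)); last by move=> i _; rewrite IH.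
rewrite sumrB; ring.
Qed.
End Gen.
Arguments Sp {V}.
Arguments Err {V}.

Lemma binc N : (N.+1 * 'C(N.+1.*2, N.+1) = 2 * N.*2.+1 * 'C(N.*2, N))%N.
Proof.
have d1 := mul_bin_diag (N.+1.*2) N.
have d2 := mul_bin_down (N.*2.+1) N.
have e1 : ((N.+1.*2).-1 = N.*2.+1)%N by lia.
have e2 : (N.*2.+1 - N = N.+1)%N by lia.
rewrite e1 in d1; rewrite e2 /= in d2.
nia.
Qed.

Section RealPart.
Variable R : realType.

Definition u (N : nat) : R := ('C(N.*2, N))%:R / 4%:R ^+ N.

Lemma u_ge0 N : 0 <= u N.
Proof. by rewrite /u divr_ge0 // exprn_ge0. Qed.

Lemma u0 : u 0 = 1.
Proof. by rewrite /u bin0 expr0 divr1. Qed.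

Lemma uS N : u N.+1 * (N.+1.*2)%:R = u N * (N.*2.+1)%:R.
Proof.
rewrite /u.
have h := binc N.
have h' : (N.+1)%:R * ('C(N.+1.*2, N.+1))%:R = 2 * (N.*2.+1)%:R * ('C(N.*2, N))%:R :> R.
  by rewrite -!natrM h.
have nz : (4%:R ^+ N : R) != 0 by rewrite expf_neq0 // pnatr_eq0.
have e : ('C(N.+1.*2, N.+1))%:R = 2 * (N.*2.+1)%:R * ('C(N.*2, N))%:R / (N.+1)%:R :> R.
  by rewrite -h' mulrC mulrA mulVf ?mul1r // pnatr_eq0.
rewrite e exprS -[N.+1.*2]muln2 natrM.
field.
by rewrite nz /= addrC natr1 pnatr_eq0.
Qed.

Lemma u_sq N : u N ^+ 2 * (N.*2.+1)%:R <= 1.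
Proof.
elim: N => [|N IH]; first by rewrite u0 expr1n mul1r.
have h := uS N.
have a0 := u_ge0 N. have b0 := u_ge0 N.+1.
move: IH h a0 b0; set a := u N; set b := u N.+1.
have e1 : (N.+1.*2 = N * 2 + 2)%N by lia.
have e2 : (N.*2.+1 = N * 2 + 1)%N by lia.
have e3 : (N.+1.*2.+1 = N * 2 + 3)%N by lia.
rewrite e3 e1 e2 !natrD !natrM.
set n := (N%:R : R).
have n0 : 0 <= n by rewrite /n ler0n.
move=> IH h a0 b0.
have hsq : b ^+ 2 * (n * 2 + 2) ^+ 2 = a ^+ 2 * (n * 2 + 1) ^+ 2.
  by rewrite -!exprMn h.
have k1 : a ^+ 2 * (n * 2 + 1) ^+ 2 * (n * 2 + 3) <= (n * 2 + 1) * (n * 2 + 3).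
  have p : 0 <= (n * 2 + 1) * (n * 2 + 3) by apply: mulr_ge0; lra.
  rewrite (_ : a ^+ 2 * (n * 2 + 1) ^+ 2 * (n * 2 + 3) = (a ^+ 2 * (n * 2 + 1)) * ((n * 2 + 1) * (n * 2 + 3))); last by ring.
  by rewrite ler_piMl.
have k2 : b ^+ 2 * (n * 2 + 3) * (n * 2 + 2) ^+ 2 <= 1 * (n * 2 + 2) ^+ 2.
  rewrite mulrAC hsq mul1r; apply: (le_trans k1); nra.
by move: k2; rewrite ler_pM2r // exprn_gt0 //; lra.
Qed.

Lemma u_cvg : u @ \oo --> 0.
Proof.
apply/cvgrPdist_le => e e0.
near=> N.
have hN : (e ^+ 2)^-1 < N%:R by near: N; exact: nbhs_infty_gtr.
rewrite sub0r normrN ger0_norm ?u_ge0 //.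
have hs := u_sq N.
have e2 : 0 < e ^+ 2 by rewrite exprn_gt0.
have w1 : e ^+ 2 * (e ^+ 2)^-1 = 1 by rewrite mulfV // gt_eqF.
have h1 := hN; rewrite -(ltr_pM2l e2) w1 in h1.
have e3 : (N.*2.+1 = N * 2 + 1)%N by lia.
rewrite e3 natrD natrM in hs.
have n0 : (0 : R) <= N%:R by rewrite ler0n.
have a0 := u_ge0 N.
have h2 : u N ^+ 2 < e ^+ 2 by nra.
rewrite leNgt; apply/negP => h3.
have : e ^+ 2 < u N ^+ 2 by rewrite ltr_pXn2r // ?nnegrE; lra.
lra.
Unshelve. all: by end_near. Qed.


Lemma S1_closed N : Sp (4%:R^-1 : R) 1 N = 2 - 2 * u N.
Proof.
elim: N => [|N IH]; first by rewrite /Sp big_ord0 u0; lra.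
rewrite /Sp big_ord_recr /= -/(Sp _ 1 N) IH -catalan_T /catalan.
have h := uS N.
have nz : (N.+1.*2)%:R != 0 :> R by rewrite pnatr_eq0.
have -> : u N.+1 = u N * (N.*2.+1)%:R / (N.+1.*2)%:R.
  by rewrite -h mulfK.
rewrite /u exprVn.
have e1 : (N.+1.*2 = N * 2 + 2)%N by lia.
have e2 : (N.*2.+1 = N * 2 + 1)%N by lia.
rewrite e1 e2 !natrD !natrM.
field.
have n0 : (0:R) <= N%:R by rewrite ler0n.
apply/and3P; split; [apply/lt0r_neq0; lra | by rewrite expf_neq0 // pnatr_eq0 | apply/lt0r_neq0; lra].
Qed.


Lemma S0_cvg : Sp (4%:R^-1 : R) 0 @ \oo --> (1 : R).
Proof.
rewrite -cvg_shiftS.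
have -> : [sequence Sp (4%:R^-1 : R) 0 n.+1]_n = (fun=> 1).
  by apply/funext => n /=; rewrite S0.
exact: cvg_cst.
Qed.

Lemma S1_cvg : Sp (4%:R^-1 : R) 1 @ \oo --> (2 : R).
Proof.
have -> : Sp (4%:R^-1 : R) 1 = (fun N => 2 - 2 * u N).
  by apply/funext => N; rewrite S1_closed.
have H := cvgB (cvg_cst (2 : R)) (cvgMl_tmp (a := 2) u_cvg).
rewrite mulr0 subr0 in H; exact: H.
Qed.

Lemma Sm_cvg m : Sp (4%:R^-1 : R) m @ \oo --> (2 ^+ m : R).
Proof.
suff H : forall m, (Sp (4%:R^-1 : R) m @ \oo --> (2 ^+ m : R)) /\ (Sp (4%:R^-1 : R) m.+1 @ \oo --> (2 ^+ m.+1 : R)) by case: (H m).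
clear m; elim=> [|m [IH1 IH2]]; first by rewrite expr0 expr1; split; [exact: S0_cvg | exact: S1_cvg].
split => //.
have -> : Sp (4%:R^-1 : R) m.+2 = (fun N => 4%:R * (Sp 4%:R^-1 m.+1 N.+1 - Sp 4%:R^-1 m N.+1)).
  apply/funext => N; rewrite S_rec addrC addKr mulrA mulfV ?mul1r //.
have -> : (2 : R) ^+ m.+2 = 4%:R * (2 ^+ m.+1 - 2 ^+ m) by rewrite !exprS; ring.
rewrite -cvg_shiftS in IH1; rewrite -cvg_shiftS in IH2.
have H := cvgMl_tmp (a := 4%:R) (cvgB IH2 IH1).
exact: H.
Qed.

End RealPart.

Section Cx.
Local Open Scope complex_scope.
Variable R : realType.

Lemma Re_sqrtc_ge0 (x : R[i]) : (0 : R) <= complex.Re (sqrtc x).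
Proof. by case: x => a b; exact: sqrtr_ge0. Qed.

Lemma norm_1s (x : R[i]) : 1 <= `|1 + sqrtc x|.
Proof.
have h := Re_sqrtc_ge0 x.
move: h; case: (sqrtc x) => p q /= hp.
rewrite normc_def /= -[1 in X in X <= _]/((1 : R)%:C) lecR.
rewrite -sqrtr1 ler_wsqrtr //.
rewrite sqrtr1 add0r; nra.
Qed.

Lemma ns_neq0 (x : R[i]) : 1 + sqrtc x != 0.
Proof.
apply/negP => /eqP h; have := norm_1s x; rewrite h normr0.
by rewrite ler10.
Qed.

Lemma catGF_alt (z : R[i]) : z != 0 ->
  catGF z = 2%:R / (1 + sqrtc (1 - 4%:R * z)).
Proof.
move=> z0; rewrite /Defs.catGF (negbTE z0).
have nz := ns_neq0 (1 - 4%:R * z).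
have hs := sqr_sqrtc (1 - 4%:R * z).
move: nz hs; set s := sqrtc _ => nz hs.
have hz : z = (1 - s ^+ 2) / 4%:R.
  by rewrite hs; field.
have ms : 1 - s != 0.
  apply/negP => /eqP h; move/eqP: z0; apply; rewrite hz.
  have -> : 1 - s ^+ 2 = (1 - s) * (1 + s) by ring.
  by rewrite h !mul0r.
rewrite hz; field.
rewrite nz /= (_ : 1 - s ^+ 2 = (1 - s) * (1 + s)); last by ring.
by rewrite mulf_neq0.
Qed.

Lemma catGF_eq (z : R[i]) : catGF z = 1 + z * catGF z ^+ 2.
Proof.
have [->|z0] := eqVneq z 0; first by rewrite /Defs.catGF eqxx mul0r addr0.
rewrite catGF_alt //.
have nz := ns_neq0 (1 - 4%:R * z).
have hs := sqr_sqrtc (1 - 4%:R * z).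
move: nz hs; set s := sqrtc _ => nz hs.
have hz : z = (1 - s ^+ 2) / 4%:R.
  by rewrite hs; field.
rewrite [in X in _ = 1 + X * _]hz; field.
exact: nz.
Qed.

Lemma catGF_norm (z : R[i]) : `|catGF z| <= 2%:R.
Proof.
have [->|z0] := eqVneq z 0; first by rewrite /Defs.catGF eqxx normr1 ler1n.
rewrite catGF_alt // normrM normfV ger0_norm ?ler0n //.
have h := norm_1s (1 - 4%:R * z).
rewrite ler_piMr ?ler0n // invf_le1 //.
by apply: lt_le_trans h.
Qed.

Lemma Err_ge0 N m : 0 <= Err (4%:R^-1 : R) 2%:R N m.
Proof.
elim: N m => [|N IH] m /=; first by rewrite exprn_ge0 ?ler0n.
by rewrite mulr_ge0 ?invr_ge0 ?ler0n // sumr_ge0.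
Qed.

Lemma Err_bound (x X : R[i]) N m : `|x| <= 4%:R^-1 -> `|X| <= 2%:R ->
  `|Err x X N m| <= (Err (4%:R^-1 : R) 2%:R N m)%:C.
Proof.
move=> hx hX; elim: N m => [|N IH] m /=.
  rewrite rmorphXn rmorph_nat normrX lerXn2r // nnegrE ?ler0n //.
rewrite normrM rmorphM fmorphV rmorph_nat rmorph_sum.
apply: ler_pM => //; rewrite ?normr_ge0 //.
apply: le_trans (ler_norm_sum _ _ _) _.
by apply: ler_sum => i _; exact: IH.
Qed.

Lemma Errr_cvg m : (fun N => Err (4%:R^-1 : R) 2%:R N m) @ \oo --> (0 : R).
Proof.
have h2 : (2%:R : R) = 1 + 4%:R^-1 * 2%:R ^+ 2.
  by field.
have -> : (fun N => Err (4%:R^-1 : R) 2%:R N m) = (fun N => 2%:R ^+ m - Sp 4%:R^-1 m N).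
  by apply/funext => N; rewrite (Err_eq _ _ _ h2).
have H := cvgB (cvg_cst (2%:R ^+ m : R)) (Sm_cvg R m).
by rewrite subrr in H; exact: H.
Qed.

Lemma Zconv m (z : R[i]) : `|z| < 4%:R^-1 -> Sp z m @ \oo --> catGF z ^+ m.
Proof.
move=> hz; apply/cvgrPdist_le => e e0.
case: e e0 => a b e0.
move: e0; rewrite ltcE /= => /andP[/eqP b0 a0].
have := Errr_cvg m => /cvgrPdist_le /(_ a a0).
apply: filterS => N hN.
rewrite (Err_eq _ _ _ (catGF_eq z)).
apply: le_trans (Err_bound z (catGF z) N m (ltW hz) (catGF_norm z)) _.
rewrite b0 -/(a%:C) lecR.
by move: hN; rewrite sub0r normrN ger0_norm // Err_ge0.
Qed.
End Cx.

Lemma Zpartial_Sp (R : realType) m (z : R[i]) :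
  Zpartial (fun n => ((T m n)%:R : R)) z = Sp z m.
Proof.
apply/funext => N; rewrite /Defs.Zpartial /series /= /Sp big_mkord.
by apply: eq_bigr => i _; rewrite rmorph_nat.
Qed.

Lemma series_Sp (R : realType) m :
  series (weighted_abs (fun n => ((T m n)%:R : R))) = Sp (4%:R^-1 : R) m.
Proof.
apply/funext => N; rewrite /series /= /Sp big_mkord.
by apply: eq_bigr => i _; rewrite /Defs.weighted_abs normr_nat exprVn.
Qed.

Lemma l1_part (R : realType) m :
  in_l1_4 (fun n => ((T m n)%:R : R)) /\ norm_l1_4 (fun n => ((T m n)%:R : R)) = 2%:R ^+ m.
Proof.
have H := Sm_cvg R m.
rewrite /Defs.in_l1_4 /Defs.norm_l1_4 series_Sp; split.
  exact: cvgP H.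
exact: cvg_lim H.
Qed.

Theorem proposition3p2 (R : realType) (k : nat) (hk : (1 <= k)%N) :
  [/\ (in_l1_4 (a_k R k) /\ norm_l1_4 (a_k R k) = 2%:R ^+ (k.*2.-1)),
      (in_l1_4 (b_k R k) /\ norm_l1_4 (b_k R k) = 2%:R ^+ (k.*2)),
      (forall z : R[i], `|z| < 4%:R^-1 ->
          Zpartial (a_k R k) z @ \oo --> catGF z ^+ (k.*2.-1)
       /\ Zpartial (b_k R k) z @ \oo --> catGF z ^+ (k.*2)) &
      (a_k R k = cpow (catalan R) (k.*2 - 2)
       /\ b_k R k = cpow (catalan R) (k.*2.-1))].
Proof.
rewrite (a_k_T R k hk) (b_k_T R k hk); split.
- exact: l1_part.
- exact: l1_part.
- move=> z hz; rewrite !Zpartial_Sp; split; exact: Zconv.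
- rewrite !cpow_T; split.
    by rewrite (_ : (k.*2 - 2).+1 = k.*2.-1)%N //; lia.
  by rewrite (_ : (k.*2.-1).+1 = k.*2)%N //; lia.
Qed.
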